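(* Fix $0<d<1$ and let $c(x)=x^d$. For common slot instances, in every game under the coordination mechanism described in the context, for every optimal assignment $s^*$ there exists a payment vector $\xi$ such that $(s^*,\xi)$ is a Nash equilibrium.
   Context: A game consists of a cost function $c$ (here $c(x)=x^d$, $c(0)=0$), slots $t=1,\dots,T$, and a set of jobs, each job $j$ having integer release time $r_j$ and deadline $d_j$ with $0<r_j<d_j<T$. A common slot instance is one in which some slot lies in $[r_j,d_j)$ for every job $j$. An assignment $s$ gives each job a slot $s_j$ with $r_j\le s_j<d_j$; the load is $l_t(s)=|\{j:s_j=t\}|$ and $C(s)=\sum_{t=1}^T c(l_t(s))$; an optimal assignment minimizes $C$. In the coordination mechanism, each job $j$ chooses a pair $(s_j,\xi_j)$ with $s_j\in[r_j,d_j)$ and payment $\xi_j\ge0$. Slot $t$ is opened iff $\sum_{j:s_j=t}\xi_j\ge c(l_t(s))$; a job whose slot is not opened has infinite cost, otherwise its cost is $\xi_j$. A profile $(s,\xi)$ is a Nash equilibrium if for every job $j$: (i) $\sum_{j':s_{j'}=s_j}\xi_{j'}\ge c(l_{s_j}(s))$; (ii) for every $t\in[r_j,d_j)\setminus\{s_j\}$, $\xi_j\le\max\{0,\,c(l_t(s)+1)-\sum_{j':s_{j'}=t}\xi_{j'}\}$; (iii) $\xi_j\le\max\{0,\,c(l_{s_j}(s))-\sum_{j':s_{j'}=s_j,\,j'\ne j}\xi_{j'}\}$. *)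

(* Defs.v *)
From Stdlib Require Import Reals Lra Lia Arith List.
Import ListNotations.
Open Scope R_scope.

(* Jobs are 0..n-1; job j has release time r j and deadline dl j.
   Slots are 1..T.  An assignment / payment is a function on job indices
   (values at indices >= n are irrelevant). *)

Definition cost (d : R) (x : nat) : R :=
  match x with O => 0 | S _ => Rpower (INR x) d end.

Definition jobs (n : nat) : list nat := seq 0 n.

Definition load (n : nat) (s : nat -> nat) (t : nat) : nat :=
  length (filter (fun j => Nat.eqb (s j) t) (jobs n)).

Definition paysum (n : nat) (s : nat -> nat) (xi : nat -> R) (t : nat) : R :=
  fold_right (fun j acc => (if Nat.eqb (s j) t then xi j else 0) + acc) 0 (jobs n).

Definition paysum_others (n : nat) (s : nat -> nat) (xi : nat -> R) (t j : nat) : R :=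
  fold_right (fun j' acc => (if andb (Nat.eqb (s j') t) (negb (Nat.eqb j' j))
                             then xi j' else 0) + acc) 0 (jobs n).

Definition total_cost (d : R) (n T : nat) (s : nat -> nat) : R :=
  fold_right (fun t acc => cost d (load n s t) + acc) 0 (seq 1 T).

Definition valid_instance (n T : nat) (r dl : nat -> nat) : Prop :=
  forall j, (j < n)%nat -> (0 < r j /\ r j < dl j /\ dl j < T)%nat.

Definition common_slot (n : nat) (r dl : nat -> nat) : Prop :=
  exists t, forall j, (j < n)%nat -> (r j <= t < dl j)%nat.

Definition feasible (n : nat) (r dl : nat -> nat) (s : nat -> nat) : Prop :=
  forall j, (j < n)%nat -> (r j <= s j < dl j)%nat.

Definition optimal (d : R) (n T : nat) (r dl : nat -> nat) (s : nat -> nat) : Prop :=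
  feasible n r dl s /\
  forall s', feasible n r dl s' -> total_cost d n T s <= total_cost d n T s'.

Definition nash (d : R) (n : nat) (r dl : nat -> nat) (s : nat -> nat) (xi : nat -> R) : Prop :=
  forall j, (j < n)%nat ->
    0 <= xi j /\
    paysum n s xi (s j) >= cost d (load n s (s j)) /\
    (forall t, (r j <= t < dl j)%nat -> t <> s j ->
       xi j <= Rmax 0 (cost d (load n s t + 1) - paysum n s xi t)) /\
    xi j <= Rmax 0 (cost d (load n s (s j)) - paysum_others n s xi (s j) j).

(* Main.v *)
Require Import Defs.
From Stdlib Require Import Reals Lra Lia Arith List.
Import ListNotations.
Open Scope R_scope.

Definition sumR (f : nat -> R) (L : list nat) : R :=
  fold_right (fun t acc => f t + acc) 0 L.

Lemma sumR_le f g L : (forall t, In t L -> g t <= f t) -> sumR g L <= sumR f L.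
Proof.
  induction L as [|x L IH]; simpl; intros H; [lra|].
  assert (g x <= f x) by (apply H; auto).
  assert (sumR g L <= sumR f L) by (apply IH; auto). lra.
Qed.

Lemma sumR_lt f g L : (forall t, In t L -> g t <= f t) ->
  (exists t, In t L /\ g t < f t) -> sumR g L < sumR f L.
Proof.
  induction L as [|x L IH]; simpl; intros H [t [Ht Hlt]]; [destruct Ht|].
  destruct Ht as [<-|Ht].
  - assert (sumR g L <= sumR f L) by (apply sumR_le; auto). lra.
  - assert (g x <= f x) by (apply H; auto).
    assert (sumR g L < sumR f L) by (apply IH; eauto). lra.
Qed.

Lemma sumR_add f g L : sumR (fun t => f t + g t) L = sumR f L + sumR g L.
Proof. induction L; simpl; lra. Qed.

Lemma sumR_mul a f L : sumR (fun t => a * f t) L = a * sumR f L.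
Proof. induction L; simpl; [lra|]. rewrite IHL. lra. Qed.

Lemma sumR_ind0 x v L : ~ In x L -> sumR (fun t => if Nat.eqb x t then v else 0) L = 0.
Proof.
  induction L as [|y L IH]; simpl; intros H; [lra|].
  destruct (Nat.eqb_spec x y); [exfalso; auto|]. rewrite IH; auto. lra.
Qed.

Lemma sumR_ind1 x v L : NoDup L -> In x L -> sumR (fun t => if Nat.eqb x t then v else 0) L = v.
Proof.
  induction L as [|y L IH]; simpl; intros Hn H; [destruct H|].
  inversion Hn; subst.
  destruct (Nat.eqb_spec x y).
  - subst. rewrite sumR_ind0; auto. lra.
  - destruct H as [H|H]; [congruence|]. rewrite IH; auto. lra.
Qed.

Lemma load_S n s t : load (S n) s t = (load n s t + (if Nat.eqb (s n) t then 1 else 0))%nat.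
Proof.
  unfold load, jobs. rewrite seq_S, filter_app, length_app. simpl.
  destruct (Nat.eqb (s n) t); reflexivity.
Qed.

Lemma sumR_ext f g L : (forall t, In t L -> f t = g t) -> sumR f L = sumR g L.
Proof.
  induction L as [|x L IH]; simpl; intros H; auto.
  rewrite H by auto. rewrite IH; auto.
Qed.

Lemma sum_loads n s T : (forall j, (j < n)%nat -> (1 <= s j < 1 + T)%nat) ->
  sumR (fun t => INR (load n s t)) (seq 1 T) = INR n.
Proof.
  induction n; intros H.
  - unfold load, jobs. simpl. induction (seq 1 T); simpl; auto. rewrite IHl; lra.
  - transitivity (sumR (fun t => INR (load n s t) + (if Nat.eqb (s n) t then 1 else 0)) (seq 1 T)).
    + apply sumR_ext. intros t _. rewrite load_S, plus_INR.
      destruct (Nat.eqb (s n) t); simpl; lra.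
    + rewrite sumR_add, IHn by (intros; apply H; lia).
      rewrite sumR_ind1.
      * rewrite S_INR. lra.
      * apply seq_NoDup.
      * apply in_seq. apply H. lia.
Qed.

Lemma load_le n s t : (load n s t <= n)%nat.
Proof.
  unfold load, jobs. eapply Nat.le_trans; [apply filter_length_le|]. rewrite length_seq. lia.
Qed.

Lemma cost_bound d n x : 0 < d < 1 -> (x <= n)%nat ->
  INR x * Rpower (INR n) (d - 1) <= cost d x /\
  ((0 < x < n)%nat -> INR x * Rpower (INR n) (d - 1) < cost d x).
Proof.
  intros Hd Hx. destruct x as [|x].
  - simpl. split; [lra| lia].
  - assert (Hx0 : 0 < INR (S x)) by (apply lt_0_INR; lia).
    assert (Hc : cost d (S x) = INR (S x) * Rpower (INR (S x)) (d - 1)).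
    { unfold cost. replace d with (1 + (d - 1)) at 1 by ring.
      rewrite Rpower_plus, Rpower_1; auto. }
    rewrite Hc.
    assert (Hle : INR (S x) <= INR n) by (apply le_INR; auto).
    unfold Rpower.
    split.
    + apply Rmult_le_compat_l; [lra|].
      destruct (Rle_lt_or_eq_dec _ _ Hle) as [Hl|He].
      * left. apply exp_increasing.
        assert (ln (INR (S x)) < ln (INR n)) by (apply ln_increasing; auto). nra.
      * rewrite He. lra.
    + intros [_ Hlt].
      apply Rmult_lt_compat_l; [lra|].
      apply exp_increasing.
      assert (ln (INR (S x)) < ln (INR n)) by (apply ln_increasing; auto; apply lt_INR; auto). nra.
Qed.

Lemma filter_full {A} (f : A -> bool) l : length (filter f l) = length l -> forall x, In x l -> f x = true.
Proof.
  induction l as [|y l IH]; simpl; intros H x Hx; [destruct Hx|].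
  destruct (f y) eqn:E; simpl in H.
  - destruct Hx as [<-|Hx]; auto; apply IH; auto; lia.
  - pose proof (filter_length_le f l). lia.
Qed.

Lemma load_const n s u t : (forall k, (k < n)%nat -> s k = u) ->
  load n s t = if Nat.eqb u t then n else 0%nat.
Proof.
  intros H. unfold load, jobs.
  assert (Hin : forall k, In k (seq 0 n) -> s k = u) by (intros k Hk; apply in_seq in Hk; apply H; lia).
  rewrite <- (length_seq n 0) at 2.
  induction (seq 0 n) as [|y l IH]; simpl; [destruct (Nat.eqb u t); auto|].
  rewrite (Hin y) by (left; reflexivity). destruct (Nat.eqb u t) eqn:E; simpl.
  - f_equal. apply IH; intros; apply Hin; right; auto.
  - apply IH; intros; apply Hin; right; auto.
Qed.

Lemma paysum_const n s u t c : (forall k, (k < n)%nat -> s k = u) ->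
  paysum n s (fun _ => c) t = if Nat.eqb u t then INR n * c else 0.
Proof.
  intros H. unfold paysum, jobs.
  assert (Hin : forall k, In k (seq 0 n) -> s k = u) by (intros k Hk; apply in_seq in Hk; apply H; lia).
  rewrite <- (length_seq n 0) at 2.
  induction (seq 0 n) as [|y l IH]; simpl; [destruct (Nat.eqb u t); lra|].
  rewrite (Hin y) by (left; reflexivity). rewrite IH by (intros; apply Hin; right; auto). destruct (Nat.eqb u t) eqn:E.
  - destruct (length l); [simpl; lra|]. rewrite S_INR. lra.
  - lra.
Qed.

Lemma paysum_others_const n s u j c : (forall k, (k < n)%nat -> s k = u) -> (j < n)%nat ->
  paysum_others n s (fun _ => c) u j = (INR n - 1) * c.
Proof.
  intros H Hj. unfold paysum_others, jobs.
  assert (Hin : forall k, In k (seq 0 n) -> s k = u) by (intros k Hk; apply in_seq in Hk; apply H; lia).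
  assert (Hj' : In j (seq 0 n)) by (apply in_seq; lia).
  assert (Hnd := seq_NoDup n 0).
  rewrite <- (length_seq n 0) at 2.
  induction (seq 0 n) as [|y l IH]; simpl; [destruct Hj'|].
  inversion Hnd; subst.
  rewrite (Hin y) by (left; reflexivity). rewrite Nat.eqb_refl. simpl.
  destruct (Nat.eqb_spec y j).
  - subst. simpl.
    assert (forall l', ~ In j l' -> (forall k, In k l' -> s k = u) ->
      fold_right (fun j' acc => (if (Nat.eqb (s j') u && negb (Nat.eqb j' j))%bool then c else 0) + acc) 0 l' = INR (length l') * c) as G.
    { induction l' as [|z l' IH']; simpl; intros Hn Hz; [lra|].
      rewrite Hz by auto. rewrite Nat.eqb_refl.
      destruct (Nat.eqb_spec z j); [exfalso; auto|]. simpl.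
      rewrite IH' by auto. destruct (length l'); [simpl; lra|]. rewrite S_INR. lra. }
    rewrite G by (auto || (intros; apply Hin; right; auto)). destruct (length l); [simpl; lra|]. rewrite S_INR. lra.
  - simpl. rewrite IH; [| intros; apply Hin; right; auto | destruct Hj'; [congruence|auto] | auto].
    destruct (length l); [simpl; lra|]. rewrite S_INR. lra.
Qed.

Lemma in_len {A} (x : A) l : In x l -> (0 < length l)%nat.
Proof. destruct l; simpl; [intros []| lia]. Qed.

Theorem theorem6 :
  forall (d : R), 0 < d < 1 ->
  forall (n T : nat) (r dl : nat -> nat),
    valid_instance n T r dl ->
    common_slot n r dl ->
    forall s : nat -> nat, optimal d n T r dl s ->
    exists xi : nat -> R, nash d n r dl s xi.
Proof.
  intros d Hd n T r dl Hv [t0 Ht0] s [Hf Hopt].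
  destruct (Nat.eq_dec n 0) as [->|Hn0].
  { exists (fun _ => 0). intros j Hj. lia. }
  set (a := Rpower (INR n) (d - 1)).
  assert (Hn : 0 < INR n) by (apply lt_0_INR; lia).
  assert (Hcn : cost d n = INR n * a).
  { unfold a. destruct n as [|n']; [lia|]. unfold cost.
    replace d with (1 + (d - 1)) at 1 by ring. rewrite Rpower_plus, Rpower_1; auto. }
  assert (Hrange : forall j, (j < n)%nat -> (1 <= s j < 1 + T)%nat).
  { intros j Hj. specialize (Hf j Hj). specialize (Hv j Hj). lia. }
  assert (Hall : forall j, (j < n)%nat -> load n s (s j) = n).
  { intros j Hj. destruct (Nat.eq_dec (load n s (s j)) n) as [|Hne]; auto. exfalso.
    assert (Hpos : (0 < load n s (s j))%nat).
    { unfold load. apply (in_len j). apply filter_In. split.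
      - unfold jobs. apply in_seq. lia.
      - apply Nat.eqb_refl. }
    assert (Hlt : sumR (fun t => a * INR (load n s t)) (seq 1 T) <
                  sumR (fun t => cost d (load n s t)) (seq 1 T)).
    { apply sumR_lt.
      - intros t _. destruct (cost_bound d n (load n s t) Hd (load_le n s t)) as [H1 _]. unfold a. lra.
      - exists (s j). split.
        + apply in_seq. apply Hrange; auto.
        + destruct (cost_bound d n (load n s (s j)) Hd (load_le n s (s j))) as [_ H2].
          unfold a. pose proof (load_le n s (s j)).
          assert (H3 := H2 ltac:(lia)). lra. }
    rewrite sumR_mul, sum_loads in Hlt by auto.
    assert (Hs' : feasible n r dl (fun _ => t0)).
    { intros k Hk. apply Ht0; auto. }
    pose proof (Hopt _ Hs') as Hle.
    change (total_cost d n T s) with (sumR (fun t => cost d (load n s t)) (seq 1 T)) in Hle.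
    change (total_cost d n T (fun _ => t0)) with (sumR (fun t => cost d (load n (fun _ => t0) t)) (seq 1 T)) in Hle.
    rewrite (sumR_ext (fun t => cost d (load n (fun _ => t0) t)) (fun t => if Nat.eqb t0 t then cost d n else 0)) in Hle.
    2: { intros t _. cbv beta. rewrite (load_const n (fun _ => t0) t0 t) by auto.
         destruct (Nat.eqb t0 t); reflexivity. }
    rewrite sumR_ind1 in Hle.
    - lra.
    - apply seq_NoDup.
    - apply in_seq. assert (H0 := Ht0 0%nat ltac:(lia)). assert (H1 := Hv 0%nat ltac:(lia)). lia. }
  assert (Hsame : forall k, (k < n)%nat -> s k = s 0%nat).
  { intros k Hk. pose proof (Hall 0%nat ltac:(lia)) as H0.
    unfold load in H0.
    assert (Hl : length (filter (fun j => Nat.eqb (s j) (s 0%nat)) (jobs n)) = length (jobs n)).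
    { rewrite H0. unfold jobs. rewrite length_seq. reflexivity. }
    apply Nat.eqb_eq. apply (filter_full _ _ Hl). unfold jobs. apply in_seq. lia. }
  assert (Ha0 : 0 <= a) by (unfold a, Rpower; left; apply exp_pos).
  assert (Ha1 : a <= 1).
  { unfold a, Rpower. rewrite <- exp_0 at 2.
    assert (Hln : 0 <= ln (INR n)).
    { rewrite <- ln_1. assert (Hn1 : 1 <= INR n) by (apply (le_INR 1); lia).
      destruct (Rle_lt_or_eq_dec _ _ Hn1) as [Hl|He].
      - left. apply ln_increasing; lra.
      - rewrite He. lra. }
    destruct (Rle_lt_or_eq_dec _ _ Hln) as [Hl|He].
    - left. apply exp_increasing. nra.
    - rewrite <- He. right. f_equal. ring. }
  exists (fun _ => a). intros j Hj.
  rewrite (Hsame j Hj).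
  assert (Hlu : load n s (s 0%nat) = n) by (apply Hall; lia).
  split; [exact Ha0|]. split; [|split].
  - rewrite paysum_const with (u := s 0%nat) by auto. rewrite Nat.eqb_refl, Hlu. lra.
  - intros t _ Ht. rewrite paysum_const with (u := s 0%nat) by auto.
    rewrite (load_const n s (s 0%nat) t) by auto.
    destruct (Nat.eqb_spec (s 0%nat) t) as [E|E]; [congruence|].
    simpl. unfold cost. replace (INR 1) with 1 by reflexivity.
    unfold Rpower. rewrite ln_1, Rmult_0_r, exp_0.
    eapply Rle_trans; [|apply Rmax_r]. lra.
  - rewrite paysum_others_const with (u := s 0%nat) by auto. rewrite Hlu, Hcn.
    eapply Rle_trans; [|apply Rmax_r]. lra.
Qed.
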